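(* Let $0<a_1\le a_2$, $q\ge2$, and let $e_1,e_2,\ldots$ be non-negative integers with $a_1q^n/n\le e_n\le a_2q^n/n$ for all $n\ge1$. Define $c_{i,j}$ by the formal power series identity $$\sum_{i,j\ge0} c_{i,j}x^iy^j = \prod_{i=1}^\infty (1-x^iy)^{-e_i}.$$ Then there exist constants $C$ and $D>1$ depending only on $a_1$ and $a_2$ such that for all integers $n\ge1$ and $0\le m\le n$, $$\frac{\sum_{j=m+1}^n c_{n,j}}{\sum_{j=0}^n c_{n,j}} \le n^C D^{-m}.$$ *)

(* Defs.v *)
From mathcomp Require Import all_boot.
From Stdlib Require Import Reals.

Set Implicit Arguments.
Unset Strict Implicit.
Unset Printing Implicit Defensive.

(* Coefficient of t^k in (1 - t)^{-e}: the multiset coefficient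
   binom(e+k-1, k) (equal to 1 for k = 0, and to 0 for e = 0, k >= 1). *)
Definition multichoose (e k : nat) : nat := 'C(e + k - 1, k).

(* trunc_coef e N a b = coefficient of x^a y^b in the finite product
   prod_{i=1}^{N} (1 - x^i y)^{-e_i}
   = prod_{i=1}^{N} sum_{k>=0} multichoose (e i) k * x^(i k) y^k. *)
Fixpoint trunc_coef (e : nat -> nat) (N a b : nat) {struct N} : nat :=
  match N with
  | 0 => ((a == 0) && (b == 0) : nat)
  | N'.+1 =>
      \sum_(0 <= k < a.+1 | (N'.+1 * k <= a) && (k <= b))
        multichoose (e N'.+1) k * trunc_coef e N' (a - N'.+1 * k) (b - k)
  end.

(* c e i j = coefficient of x^i y^j in prod_{i>=1} (1 - x^i y)^{-e_i}.
   Factors with index > i contribute only 1 to the x^i coefficient, so it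
   equals the coefficient in the finite product over indices 1..i. *)
Definition c (e : nat -> nat) (i j : nat) : nat := trunc_coef e i i j.

(* Main.v *)
From HB Require Import structures.
Require Import Defs.
From mathcomp Require Import all_boot zify.
From Stdlib Require Import Reals Lra.

Set Implicit Arguments.
Unset Strict Implicit.
Unset Printing Implicit Defensive.



Local Open Scope R_scope.

Lemma RplusA' : associative Rplus. Proof. move=> *; ring. Qed.
Lemma RmultA' : associative Rmult. Proof. move=> *; ring. Qed.
Lemma Rmult_0_l' (x : R) : 0 * x = 0. Proof. ring. Qed.
Lemma Rmult_0_r' (x : R) : x * 0 = 0. Proof. ring. Qed.
Lemma Rmult_plus_distr_r' (x y z : R) : (x + y) * z = x * z + y * z. Proof. ring. Qed.

HB.instance Definition _ := Monoid.isComLaw.Build R 0 Rplus RplusA' Rplus_comm Rplus_0_l.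
HB.instance Definition _ := Monoid.isComLaw.Build R 1 Rmult RmultA' Rmult_comm Rmult_1_l.
HB.instance Definition _ := Monoid.isMulLaw.Build R 0 Rmult Rmult_0_l' Rmult_0_r'.
HB.instance Definition _ := Monoid.isAddLaw.Build R Rmult Rplus Rmult_plus_distr_r' Rmult_plus_distr_l.

Notation "\rsum_ ( m <= i < n | P ) F" := (\big[Rplus/0]_(m <= i < n | P) F)
  (at level 41, F at level 41, i, m, n at level 50).
Notation "\rsum_ ( m <= i < n ) F" := (\big[Rplus/0]_(m <= i < n) F)
  (at level 41, F at level 41, i, m, n at level 50).

Lemma INR_sum I (r : seq I) (P : pred I) (F : I -> nat) :
  INR (\sum_(i <- r | P i) F i) = \big[Rplus/0]_(i <- r | P i) INR (F i).
Proof. by apply: (big_morph INR plus_INR). Qed.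

Lemma rsum_le I (r : seq I) (P : pred I) (F G : I -> R) :
  (forall i, P i -> F i <= G i) ->
  \big[Rplus/0]_(i <- r | P i) F i <= \big[Rplus/0]_(i <- r | P i) G i.
Proof. move=> H; apply: (big_ind2 Rle) => //; [lra | move=> *; lra]. Qed.

Lemma rsum_ge0 I (r : seq I) (P : pred I) (F : I -> R) :
  (forall i, P i -> 0 <= F i) -> 0 <= \big[Rplus/0]_(i <- r | P i) F i.
Proof. move=> H; apply: (big_ind (fun x => 0 <= x)) => //; [lra | move=> *; lra]. Qed.

Lemma rsum_shift (f : nat -> R) (k B : nat) :
  \rsum_(0 <= b < B) (if leq k b then f (b - k)%nat else 0) = \rsum_(0 <= b < B - k) f b.
Proof.
elim: B => [|B IH]; first by rewrite sub0n !big_geq.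
rewrite big_nat_recr //= IH.
case: (leqP k B) => hk.
  by rewrite subSn // big_nat_recr //=; lra.
have -> : (B.+1 - k = 0)%nat by apply/eqP; rewrite subn_eq0.
have -> : (B - k = 0)%nat by apply/eqP; rewrite subn_eq0 ltnW.
rewrite big_geq //; lra.
Qed.

Lemma rsum_widen (f : nat -> R) (n m : nat) : (n <= m)%nat -> (forall i, 0 <= f i) ->
  \rsum_(0 <= b < n) f b <= \rsum_(0 <= b < m) f b.
Proof.
move=> hnm hf; rewrite (big_cat_nat (leq0n n) hnm) /=.
have := @rsum_ge0 _ (index_iota n m) xpredT f (fun i _ => hf i). lra.
Qed.


Local Open Scope R_scope.

Lemma mc0 e : multichoose e 0 = 1%nat.
Proof. by rewrite /multichoose bin0. Qed.
Lemma mc0S k : multichoose 0 k.+1 = 0%nat.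
Proof. by rewrite /multichoose add0n subn1 /= bin_small. Qed.
Lemma mcSS e k : multichoose e.+1 k.+1 = (multichoose e.+1 k + multichoose e k.+1)%nat.
Proof.
rewrite /multichoose.
have -> : (e.+1 + k.+1 - 1 = (e + k).+1)%nat by lia.
have -> : (e.+1 + k - 1 = e + k)%nat by lia.
have -> : (e + k.+1 - 1 = e + k)%nat by lia.
by rewrite binS addnC.
Qed.
Lemma mc1 e : multichoose e 1 = e.
Proof. by rewrite /multichoose addn1 subn1 /= bin1. Qed.

Lemma geo_mc (z : R) : 0 <= z < 1 -> forall e K,
  \rsum_(0 <= k < K) INR (multichoose e k) * z ^ k <= (/ (1 - z)) ^ e.
Proof.
move=> [z0 z1].
have iz : 1 <= / (1 - z).
  rewrite -Rinv_1; apply: Rinv_le_contravar; lra.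
elim=> [|e IH] K.
  case: K => [|K]; first by rewrite big_geq //=; lra.
  rewrite big_nat_recl // mc0 big1 /=; first lra.
  by move=> i _; rewrite mc0S /=; ring.
case: K => [|K].
  rewrite big_geq //; apply: pow_le; apply: Rlt_le; apply: Rinv_0_lt_compat; lra.
set A := fun K => \rsum_(0 <= k < K) INR (multichoose e.+1 k) * z ^ k.
have hA : A K.+1 = z * A K + \rsum_(0 <= k < K.+1) INR (multichoose e k) * z ^ k.
  rewrite /A !big_nat_recl // !mc0.
  under eq_bigr do rewrite mcSS plus_INR.
  rewrite (eq_bigr (fun i => z * (INR (multichoose e.+1 i) * z ^ i) + INR (multichoose e i.+1) * z ^ i.+1)); last by move=> i _ /=; ring.
  rewrite big_split /= -big_distrr /=. ring.
have hmono : A K <= A K.+1.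
  apply: rsum_widen => // i; apply: Rmult_le_pos; [apply: pos_INR | apply: pow_le; lra].
have := IH K.+1.
rewrite -/(A K.+1) /=.
move=> hB.
have h1 : (1 - z) * A K.+1 <= (/ (1 - z)) ^ e.
  have : z * A K <= z * A K.+1 by apply: Rmult_le_compat_l.
  lra.
have hpos : 0 < 1 - z by lra.
apply: (Rmult_le_reg_l (1 - z)) => //.
rewrite -Rmult_assoc Rinv_r; lra.
Qed.


Local Open Scope R_scope.

Definition yy : R := 3 / 2.

Fixpoint G (q : nat) (e : nat -> nat) (N : nat) : R :=
  match N with
  | 0 => 1
  | N'.+1 => G q e N' * (/ (1 - yy / INR q ^ N'.+1)) ^ (e N'.+1)
  end.

Lemma z_bound (q i : nat) : (2 <= q)%nat -> (1 <= i)%nat -> 0 <= yy / INR q ^ i <= 3/4.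
Proof.
move=> hq hi.
have hQ : 2 <= INR q by have := le_INR 2 q (ssrnat.leP hq); rewrite /=; lra.
have hQi : 2 <= INR q ^ i.
  case: i hi => [//|i] _; rewrite /=.
  have : 1 <= INR q ^ i by apply: pow_R1_Rle; lra.
  nra.
split.
  rewrite /yy /Rdiv; apply: Rmult_le_pos; first lra.
  apply: Rlt_le; apply: Rinv_0_lt_compat; lra.
rewrite /yy; apply: (Rmult_le_reg_r (INR q ^ i)); first lra.
rewrite /Rdiv Rmult_assoc Rinv_l; last lra.
nra.
Qed.

Lemma G_S q e N : G q e N.+1 = G q e N * (/ (1 - yy / INR q ^ N.+1)) ^ (e N.+1).
Proof. by []. Qed.

Lemma G_ge1 q e N : (2 <= q)%nat -> 1 <= G q e N.
Proof.
move=> hq; elim: N => [|N IH]; first by rewrite /=; lra.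
rewrite G_S.
have [z0 z1] := z_bound hq (ltn0Sn N).
have : 1 <= (/ (1 - yy / INR q ^ N.+1)) ^ e N.+1.
  apply: pow_R1_Rle. rewrite -Rinv_1; apply: Rinv_le_contravar; lra.
nra.
Qed.

Lemma mainB q e : (2 <= q)%nat -> forall N a B,
  \rsum_(0 <= b < B) INR (trunc_coef e N a b) * yy ^ b <= INR q ^ a * G q e N.
Proof.
move=> hq.
have hQ : 2 <= INR q by have := le_INR 2 q (ssrnat.leP hq); rewrite /=; lra.
elim=> [|N IH] a B.
  case: B => [|B]; first by rewrite big_geq //=; have := G_ge1 e 0 hq; have := pow_le (INR q) a; rewrite /=; nra.
  rewrite big_nat_recl // big1 /=; last by move=> i _; rewrite andbF /=; ring.
  have : 1 <= INR q ^ a by apply: pow_R1_Rle; lra.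
  case: (a == 0%nat) => /=; lra.
set Q := INR q.
set z := yy / Q ^ N.+1.
have [z0 z1] := z_bound hq (ltn0Sn N).
rewrite -/Q -/z in z0 z1.
have hG := G_ge1 e N hq.
have hQN : 0 < Q ^ N.+1 by apply: pow_lt; rewrite /Q; lra.
simpl trunc_coef.
under eq_bigr do rewrite INR_sum big_mkcond /= (big_distrl (yy ^ _)) /=.
rewrite exchange_big /=.
apply: (Rle_trans _ (\rsum_(0 <= k < a.+1) INR (multichoose (e N.+1) k) * z ^ k * (Q ^ a * G q e N))).
  apply: rsum_le => k _.
  case: (leqP (N.+1 * k) a) => hk /=.
    rewrite (eq_bigr (fun b => INR (multichoose (e N.+1) k) * yy ^ k *
        (if leq k b then INR (trunc_coef e N (a - N.+1 * k) (b - k)) * yy ^ (b - k) else 0))); last first.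
      move=> b _; case: (leqP k b) => hb /=.
        have -> : yy ^ b = yy ^ k * yy ^ (b - k) by rewrite -pow_add plusE subnKC.
        rewrite mult_INR; ring.
      ring.
    rewrite -big_distrr /= (rsum_shift (fun b => INR (trunc_coef e N (a - N.+1 * k) b) * yy ^ b)).
    apply: (Rle_trans _ (INR (multichoose (e N.+1) k) * yy ^ k * (Q ^ (a - N.+1 * k) * G q e N))).
      apply: Rmult_le_compat_l.
        apply: Rmult_le_pos; [apply: pos_INR | apply: pow_le; rewrite /yy; lra].
      apply: Rle_trans (IH _ B).
      apply: rsum_widen; first by apply: leq_subr.
      move=> i; apply: Rmult_le_pos; [apply: pos_INR | apply: pow_le; rewrite /yy; lra].
    right.
    have -> : Q ^ a = Q ^ (a - N.+1 * k) * (Q ^ N.+1) ^ k.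
      by rewrite -pow_mult -pow_add multE plusE subnK.
    rewrite /z /Rdiv Rpow_mult_distr pow_inv.
    field; apply: pow_nonzero; lra.
  rewrite big1 /=; last by move=> b _; ring.
  have hQa : 0 <= Q ^ a by apply: pow_le; rewrite /Q; lra.
  apply: Rmult_le_pos; last by apply: Rmult_le_pos; lra.
  apply: Rmult_le_pos; [apply: pos_INR | apply: pow_le; lra].
rewrite -big_distrl /=.
have := geo_mc (conj z0 (Rle_lt_trans _ _ _ z1 (ltac:(lra) : 3/4 < 1))) (e N.+1) a.+1.
rewrite -/z.
have : 0 <= Q ^ a * G q e N by apply: Rmult_le_pos; [apply: pow_le; rewrite /Q |]; lra.
move=> h1 h2.
apply: Rle_trans (Rmult_le_compat_r _ _ _ h1 h2) _.
right; rewrite /=; ring.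
Qed.


Local Open Scope R_scope.

Lemma inv_le_exp z : 0 <= z <= 3/4 -> / (1 - z) <= exp (4 * z).
Proof.
move=> hz.
have h1 := exp_ineq1_le (4 * z).
have hp : 0 < 1 - z by lra.
apply: (Rmult_le_reg_l (1 - z)) => //.
rewrite Rinv_r; last lra.
nra.
Qed.

Lemma pow_exp x n : exp x ^ n = exp (INR n * x).
Proof.
elim: n => [|n IH]; first by rewrite /= Rmult_0_l exp_0.
rewrite S_INR /= IH -exp_plus; f_equal; ring.
Qed.

Fixpoint H (n : nat) : R := match n with 0 => 0 | n'.+1 => H n' + / INR n'.+1 end.

Lemma exp_mono x y : x <= y -> exp x <= exp y.
Proof. case=> h; [left; exact: exp_increasing | by rewrite h; right]. Qed.
Lemma ln_mono x y : 0 < x -> x <= y -> ln x <= ln y.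
Proof. move=> hx; case=> h; [left; exact: ln_increasing | by rewrite h; right]. Qed.

Lemma G_bound q e a2 : (2 <= q)%nat -> 0 <= a2 ->
  (forall i, (1 <= i)%nat -> INR (e i) <= a2 * INR q ^ i / INR i) ->
  forall N, G q e N <= exp (6 * a2 * H N).
Proof.
move=> hq ha2 he; elim=> [|N IH]; first by rewrite /= Rmult_0_r exp_0; lra.
rewrite G_S.
change (H N.+1) with (H N + / INR N.+1).
rewrite Rmult_plus_distr_l exp_plus.
have [z0 z1] := z_bound hq (ltn0Sn N).
have hG := G_ge1 e N hq.
have hQ : 0 < INR q ^ N.+1.
  apply: pow_lt; have := le_INR 2 q (ssrnat.leP hq); rewrite /=; lra.
apply: Rmult_le_compat => //; first by lra.
  apply: pow_le; apply: Rlt_le; apply: Rinv_0_lt_compat; lra.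
apply: Rle_trans (pow_incr _ _ (e N.+1) _) _.
  split; [apply: Rlt_le; apply: Rinv_0_lt_compat; lra | exact: inv_le_exp].
rewrite pow_exp; apply: exp_mono.
have hN : 0 < INR N.+1 by apply: lt_0_INR; apply/ssrnat.ltP.
have := he N.+1 (ltn0Sn N).
move=> h.
apply: Rle_trans (Rmult_le_compat_r (4 * (yy / INR q ^ N.+1)) _ _ _ h) _.
  lra.
right; rewrite /yy; field; lra.
Qed.

Lemma H_bound n : (1 <= n)%nat -> H n <= 1 + ln (INR n).
Proof.
case: n => [//|n] _; elim: n => [|n IH].
  rewrite /= ln_1; lra.
change (H n.+2) with (H n.+1 + / INR n.+2).
have h1 : 0 < INR n.+1 by apply: lt_0_INR; apply/ssrnat.ltP.
have h2 : INR n.+2 = INR n.+1 + 1 by rewrite S_INR.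
suff : / INR n.+2 <= ln (INR n.+2) - ln (INR n.+1) by lra.
have hx : INR n.+1 / INR n.+2 <= exp (- / INR n.+2).
  apply: Rle_trans (exp_ineq1_le _); rewrite h2; right; field; lra.
have hp : 0 < INR n.+1 / INR n.+2.
  apply: Rmult_lt_0_compat; [lra|apply: Rinv_0_lt_compat; lra].
have := ln_mono hp hx.
rewrite ln_exp /Rdiv ln_mult; [|lra|apply: Rinv_0_lt_compat; lra].
rewrite ln_Rinv; [|lra].
move=> h; lra.
Qed.



Lemma trunc00 e N : trunc_coef e N 0 0 = 1%nat.
Proof.
elim: N => [//|N IH] /=.
by rewrite big_mkcond big_nat1 /= muln0 /= mc0 subn0 IH.
Qed.

Lemma c_n1 e n : (1 <= n)%nat -> (e n <= c e n 1)%nat.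
Proof.
case: n => [//|n] _.
rewrite /c /= big_mkcond big_nat_recl // big_nat_recl //=.
rewrite muln1 leqnn subnn /= trunc00 mc1 muln1.
lia.
Qed.

Local Close Scope R_scope.

Theorem proposition2p3 (a1 a2 : R) (ha1 : (0 < a1)%R) (ha12 : (a1 <= a2)%R) :
  exists (C D : R), (1 < D)%R /\
    forall (q : nat) (e : nat -> nat), (2 <= q)%N ->
      (forall n : nat, (1 <= n)%N ->
         (a1 * INR q ^ n / INR n <= INR (e n) <= a2 * INR q ^ n / INR n)%R) ->
      forall n m : nat, (1 <= n)%N -> (m <= n)%N ->
        (INR (\sum_(m.+1 <= j < n.+1) c e n j) / INR (\sum_(0 <= j < n.+1) c e n j)
           <= Rpower (INR n) C * / D ^ m)%R.
Proof.
Local Open Scope R_scope.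
exists (1 + 6 * a2 + 2 * (6 * a2 + Rabs (ln a1))), yy.
split; first by rewrite /yy; lra.
move=> q e hq hb n m hn hmn.
set S := INR (\sum_(0 <= j < n.+1) c e n j).
set T := INR (\sum_(m.+1 <= j < n.+1) c e n j).
have hQ : 2 <= INR q by have := le_INR 2 q (ssrnat.leP hq); rewrite /=; lra.
have hnR : 1 <= INR n by have := le_INR 1 n (ssrnat.leP hn); rewrite /=; lra.
have hQn : 0 < INR q ^ n by apply: pow_lt; lra.
have hL : 0 < a1 * INR q ^ n / INR n.
  apply: Rmult_lt_0_compat; [nra | apply: Rinv_0_lt_compat; lra].
have hSL : a1 * INR q ^ n / INR n <= S.
  apply: Rle_trans (proj1 (hb n hn)) _.
  apply: le_INR; apply/ssrnat.leP.
  apply: leq_trans (c_n1 e hn) _.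
  case: n hn {hb hmn S T hnR hQn hL} => [//|n] _.
  rewrite big_nat_recl // big_nat_recl //; lia.
have hS : 0 < S by lra.
have hT0 : 0 <= T by apply: pos_INR.
have hTS : T <= S.
  apply: le_INR; apply/ssrnat.leP.
  rewrite (@big_cat_nat _ _ _ m.+1 0 n.+1) //=; lia.
have hpos : forall x, 0 <= x -> 0 <= x * / yy ^ m.
  move=> x hx; apply: Rmult_le_pos => //; apply: Rlt_le; apply: Rinv_0_lt_compat.
  apply: pow_lt; rewrite /yy; lra.
case: (leqP n 1) => hn1.
  have -> : n = 1%nat by lia.
  rewrite /Rpower ln_1 Rmult_0_r exp_0 Rmult_1_l.
  rewrite /T in hTS *; clear hT0 hpos T.
  case: m hmn hTS => [|m] hmn hTS.
    rewrite /= Rinv_1; apply: (Rmult_le_reg_r S) => //.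
    rewrite /Rdiv Rmult_assoc Rinv_l; lra.
  have -> : (m.+1 = 1)%nat by lia.
  rewrite big_geq //= /Rdiv Rmult_0_l.
  apply: Rlt_le; apply: Rinv_0_lt_compat; rewrite /yy; lra.
have hyym : 0 < yy ^ m by apply: pow_lt; rewrite /yy; lra.
have hG := G_bound hq (ltac:(lra) : 0 <= a2) (fun i hi => proj2 (hb i hi)) n.
have hH := H_bound hn.
have hTb : yy ^ m * T <= INR q ^ n * exp (6 * a2 * (1 + ln (INR n))).
  apply: (Rle_trans _ (\rsum_(0 <= j < n.+1) INR (c e n j) * yy ^ j)).
    rewrite /T INR_sum big_distrr /=.
    apply: (Rle_trans _ (\rsum_(m.+1 <= j < n.+1) INR (c e n j) * yy ^ j)).
      rewrite big_nat_cond [X in _ <= X]big_nat_cond.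
      apply: rsum_le => j /andP [/andP [hj _] _].
      rewrite Rmult_comm; apply: Rmult_le_compat_l; first by apply: pos_INR.
      apply: Rle_pow; first by rewrite /yy; lra.
      apply/ssrnat.leP; lia.
    rewrite [X in _ <= X](@big_cat_nat _ _ _ m.+1 0 n.+1) //=.
    have := @rsum_ge0 _ (index_iota 0 m.+1) xpredT (fun j => INR (c e n j) * yy ^ j).
    move=> h; have := h (fun j _ => Rmult_le_pos _ _ (pos_INR _) (pow_le _ _ (ltac:(rewrite /yy; lra) : 0 <= yy))).
    lra.
  apply: Rle_trans (mainB e hq n n n.+1) _.
  apply: Rmult_le_compat_l; first lra.
  apply: Rle_trans hG _; apply: exp_mono.
  apply: Rmult_le_compat_l => //; lra.
have hln2 : / 2 < ln (INR n).
  apply: Rlt_le_trans ln_lt_2 _; apply: ln_mono; first lra.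
  have := le_INR 2 n (ssrnat.leP hn1); rewrite /=; lra.
set K := 1 + ln (INR n) * 1 + 6 * a2 * (1 + ln (INR n)) - ln a1.
have hRHS : T / S <= exp (ln (INR n) + 6 * a2 * (1 + ln (INR n)) - ln a1) * / yy ^ m.
  rewrite /Rminus exp_plus exp_plus exp_ln; last lra.
  rewrite exp_Ropp exp_ln //.
  have hTle : T <= / yy ^ m * (INR q ^ n * exp (6 * a2 * (1 + ln (INR n)))).
    apply: (Rmult_le_reg_l (yy ^ m)) => //.
    rewrite -Rmult_assoc Rinv_r; lra.
  apply: (Rle_trans _ (T * / (a1 * INR q ^ n / INR n))).
    rewrite /Rdiv; apply: Rmult_le_compat_l => //.
    apply: Rinv_le_contravar => //.
  apply: (Rle_trans _ ((/ yy ^ m * (INR q ^ n * exp (6 * a2 * (1 + ln (INR n))))) * / (a1 * INR q ^ n / INR n))).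
    apply: Rmult_le_compat_r => //; apply: Rlt_le; apply: Rinv_0_lt_compat => //.
  right; field; split; lra.
apply: Rle_trans hRHS _.
apply: Rmult_le_compat_r; first by apply: Rlt_le; apply: Rinv_0_lt_compat.
rewrite /Rpower; apply: exp_mono.
have habs : - ln a1 <= Rabs (ln a1) by rewrite -(Rabs_Ropp (ln a1)); apply: RRle_abs.
have habs0 : 0 <= Rabs (ln a1) by apply: Rabs_pos.
nra.
Qed.
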